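(* Let $I$ be a countable index set with nested finite subsets $I_1\subset I_2\subset\cdots$, $\bigcup_nI_n=I$, let $W$ be a compact Hausdorff space and $m:\mathcal{F}[I]\to C^*(W)$ a frame measure function. Let $\mathcal{F}\in\mathcal{F}[I]$. Then: (1) if $c=\lim_{i\to\infty}a_i(\mathcal{F})$ exists then $m(\mathcal{F})$ is the constant function with value $c$; (2) $\liminf_i a_i(\mathcal{F})\le m(\mathcal{F})(w)\le\limsup_i a_i(\mathcal{F})$ for all $w\in W$; (3) there exist $v,w\in W$ (depending on $\mathcal{F}$) with $m(\mathcal{F})(v)=\liminf_i a_i(\mathcal{F})$ and $m(\mathcal{F})(w)=\limsup_i a_i(\mathcal{F})$.
   Context: $\mathcal{F}[I]$: families $\{f_i\}_{i\in I}$ in a separable Hilbert space that are frames for their closed span; $\tilde f_i=S^{-1}f_i$ canonical dual; $b_n(\mathcal{F})=\sum_{i\in I_n}\langle f_i,\tilde f_i\rangle$, $a_n(\mathcal{F})=b_n(\mathcal{F})/|I_n|$. $\mathbf{x}\approx\mathbf{y}$ iff $\lim_n(x_n-y_n)/|I_n|=0$; for nonnegative sequences $\mathbf{y}\leqq\mathbf{x}$ iff $\liminf_n(x_n-y_n)/|I_n|\ge0$. A nonnegative sequence $\mathbf{x}$ is frame compatible if $0\le x_1\le|I_1|$, $0\le x_i-x_{i-1}\le|I_i\setminus I_{i-1}|$; $X$ the set of these, $X^+=\{c\mathbf{x}:\mathbf{x}\in X,c\ge0\}$, $X^{\mathbb{R}}=\{\mathbf{x}^1-\mathbf{x}^2:\mathbf{x}^j\in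 X^+\}$. $C^*(W)$: real continuous functions on $W$. A sequence measure function is a linear $m:X^{\mathbb{R}}\to C^*(W)$ with: $m(\mathbf{x})=m(\mathbf{y})$ iff $\mathbf{x}\approx\mathbf{y}$ ($\mathbf{x},\mathbf{y}\in X^{\mathbb{R}}$); $m(\mathbf{x})\le m(\mathbf{y})$ pointwise iff $\mathbf{x}\leqq\mathbf{y}$ ($\mathbf{x},\mathbf{y}\in X^+$); $m(\mathbf{i})=1$ for $\mathbf{i}=(|I_1|,|I_2|,\dots)$. A frame measure function is $\mathcal{F}\mapsto m(b(\mathcal{F}))$ for a sequence measure function $m$. *)

(* Defs.v *)
From HB Require Import structures.
From mathcomp Require Import all_boot all_order all_algebra.
From mathcomp Require Import all_classical all_reals all_analysis.
From mathcomp Require Import complex finmap.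

Set Implicit Arguments.
Unset Strict Implicit.
Unset Printing Implicit Defensive.

Import Order.TTheory GRing.Theory Num.Theory.
Import numFieldNormedType.Exports.

Local Open Scope classical_set_scope.
Local Open Scope ring_scope.

Section Hilbert.
Context {R : realType} {H : lmodType R[i]} (ip : H -> H -> R[i]).

Definition sqnorm (x : H) : R := complex.Re (ip x x).
Definition hnorm (x : H) : R := Num.sqrt (sqnorm x).

Definition cabs2 (z : R[i]) : R := complex.Re z ^+ 2 + complex.Im z ^+ 2.

Definition is_separable_hilbert : Prop :=
  [/\ (forall (a : R[i]) (x y z : H), ip (a *: x + y) z = a * ip x z + ip y z)
      /\ (forall x y : H, ip y x = conjc (ip x y)),
      (forall x : H, 0 <= sqnorm x),
      (forall x : H, ip x x = 0 -> x = 0),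
      (forall u : nat -> H,
         (forall e : R, 0 < e -> exists N : nat,
            forall n k, (N <= n)%N -> (N <= k)%N -> hnorm (u n - u k) < e) ->
         exists l : H, (fun n => hnorm (u n - l)) @ \oo --> (0 : R))
    & (exists d : nat -> H, forall (x : H) (e : R), 0 < e ->
         exists n, hnorm (x - d n) < e)].

Context {I : choiceType}.

Definition cspan (f : I -> H) (x : H) : Prop :=
  forall e : R, 0 < e -> exists (s : {fset I}) (c : I -> R[i]),
    hnorm (x - \sum_(i <- s) c i *: f i) < e.

Definition is_frame_for_span (f : I -> H) : Prop :=
  exists A B : R, [/\ 0 < A, 0 < B &
    forall x, cspan f x ->
      ((A * sqnorm x)%:E <= \esum_(i in [set: I]) (cabs2 (ip x (f i)))%:E)%E /\
      (\esum_(i in [set: I]) (cabs2 (ip x (f i)))%:E <= (B * sqnorm x)%:E)%E].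

(* ft is the canonical dual S^{-1} f of f, where S g = sum_j <g,f_j> f_j is
   the frame operator on the closed span (the series converges
   unconditionally; we evaluate it along the exhaustion J of I) *)
Definition is_canonical_dual (J : nat -> {fset I}) (f ft : I -> H) : Prop :=
  forall i, cspan f (ft i) /\
    (fun n => hnorm (\sum_(j <- J n) ip (ft i) (f j) *: f j - f i)) @ \oo
      --> (0 : R).

(* b_n(F) = sum_{i in I_n} <f_i, ft_i>  (this number is real) *)
Definition frame_b (J : nat -> {fset I}) (f ft : I -> H) (n : nat) : R :=
  \sum_(i <- J n) complex.Re (ip (f i) (ft i)).

End Hilbert.

Section SeqMeasure.
Context {R : realType} {I : choiceType} (J : nat -> {fset I}).

Definition cardJ (n : nat) : R := (#|` J n|)%fset%:R.

Definition frame_compatible (x : nat -> R) : Prop :=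
  (0 <= x 0%N <= cardJ 0%N) /\
  forall n, 0 <= x n.+1 - x n <= (#|` (J n.+1 `\` J n)%fset |)%fset%:R.

Definition XP (x : nat -> R) : Prop :=
  exists (y : nat -> R) (c : R),
    [/\ frame_compatible y, 0 <= c & x = (fun n => c * y n)].

Definition XR (x : nat -> R) : Prop :=
  exists y z : nat -> R, [/\ XP y, XP z & x = (fun n => y n - z n)].

Definition seq_approx (x y : nat -> R) : Prop :=
  (fun n => (x n - y n) / cardJ n) @ \oo --> (0 : R).

Definition seq_leqq (y x : nat -> R) : Prop :=
  0 <= limn_inf (fun n => (x n - y n) / cardJ n).

Definition is_seq_measure {W : topologicalType}
    (m : (nat -> R) -> W -> R) : Prop :=
  [/\ (forall x, XR x -> continuous (m x)),
      (forall (x y : nat -> R) (a b : R), XR x -> XR y ->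
         m (fun n => a * x n + b * y n) = (fun w => a * m x w + b * m y w)),
      (forall x y, XR x -> XR y -> (m x = m y <-> seq_approx x y)),
      (forall x y, XP x -> XP y ->
         ((forall w, m x w <= m y w) <-> seq_leqq x y))
    & m cardJ = (fun _ => 1)].

End SeqMeasure.

(* Main.v *)
Require Import Defs.
From HB Require Import structures.
From mathcomp Require Import all_boot all_order all_algebra.
From mathcomp Require Import all_classical all_reals all_analysis.
From mathcomp Require Import complex finmap.
From mathcomp Require Import ring lra.

Import Order.TTheory GRing.Theory Num.Theory.
Import numFieldNormedType.Exports.
Local Open Scope classical_set_scope.
Local Open Scope ring_scope.

Section Hil.
Variables (R : realType) (H : lmodType R[i]) (ip : H -> H -> R[i]).
Hypothesis lin : forall a x y z, ip (a *: x + y) z = a * ip x z + ip y z.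
Hypothesis csym : forall x y, ip y x = conjc (ip x y).
Hypothesis pos : forall x, 0 <= sqnorm ip x.

Lemma ip0l z : ip 0 z = 0.
Proof.
have := lin 1 0 0 z; rewrite scaler0 addr0 mul1r => h.
by apply/eqP; rewrite -(subrr (ip 0 z)) {2}h addrK.
Qed.

Lemma ipD x y z : ip (x + y) z = ip x z + ip y z.
Proof. by have := lin 1 x y z; rewrite scale1r mul1r. Qed.

Lemma ipZ a x z : ip (a *: x) z = a * ip x z.
Proof. by have := lin a x 0 z; rewrite addr0 ip0l addr0. Qed.

Lemma ipB x y z : ip (x - y) z = ip x z - ip y z.
Proof. by have := lin (-1) y x z; rewrite scaleN1r mulN1r addrC [RHS]addrC. Qed.

Lemma ip_sum (I : Type) (s : seq I) (al : I -> R[i]) (f : I -> H) z :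
  ip (\sum_(j <- s) al j *: f j) z = \sum_(j <- s) al j * ip (f j) z.
Proof.
elim: s => [|j s IH]; first by rewrite !big_nil ip0l.
by rewrite !big_cons ipD ipZ IH.
Qed.

Lemma Re_sum (I : Type) (s : seq I) (g : I -> R[i]) :
  complex.Re (\sum_(j <- s) g j) = \sum_(j <- s) complex.Re (g j).
Proof.
elim: s => [|j s IH]; first by rewrite !big_nil.
rewrite !big_cons -IH; by case: (g j); case: (\sum_(j <- s) g j).
Qed.

Lemma cs_alg (p q z : R[i]) : 0 <= complex.Re q -> 0 <= complex.Re p ->
  0 <= complex.Re ((- z) * conjc ((- z) * q + (Complex (complex.Re q + 1) 0) * z)
     + (Complex (complex.Re q + 1) 0) * conjc ((- z) * conjc z + (Complex (complex.Re q + 1) 0) * p)) ->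
  cabs2 z <= (complex.Re q + 1) * complex.Re p.
Proof.
case: p => p1 p2; case: q => q1 q2; case: z => z1 z2 /= hq hp.
rewrite /cabs2 /=. nra.
Qed.

Lemma cs x y : cabs2 (ip x y) <= (sqnorm ip y + 1) * sqnorm ip x.
Proof.
apply: cs_alg; rewrite -?/(sqnorm ip _); try exact: pos.
set s := - ip x y; set t := Complex _ _.
have := pos (s *: y + t *: x); rewrite /sqnorm.
rewrite lin ipZ (csym _ y) (csym _ x) !lin !ipZ.
by rewrite -(csym x y).
Qed.


Lemma Re_mulJ (w : R[i]) : complex.Re (w * conjc w) = cabs2 w.
Proof. by case: w => w1 w2; rewrite /cabs2 /=; lra. Qed.

Lemma cabs2_ge0 (w : R[i]) : 0 <= cabs2 w.
Proof. by case: w => w1 w2; rewrite /cabs2 /=; nra. Qed.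

Lemma cabs2_conj_ge (w : R[i]) : complex.Re w ^+ 2 <= cabs2 (conjc w).
Proof. by case: w => w1 w2; rewrite /cabs2 /=; nra. Qed.

Lemma final_arith (c S K h e : R) : 0 < e -> 1 <= K -> 0 <= h -> h < e / K ->
  (S - c)^+2 <= K * h^+2 -> 0 <= S -> c^+2 <= S -> -e <= c /\ c^+2 - e <= c.
Proof.
move=> e0 K1 h0 hK Sc S0 cS.
have hKe : h * K < e by rewrite -ltr_pdivlMr //; lra.
have : K * h^+2 <= (h * K)^+2 by nra.
have hK0 : 0 <= h * K by nra.
have : 0 < (e - h * K) * (e + h * K) by apply: mulr_gt0; lra.
have : (h * K)^+2 < e^+2 by nra.
move=> h1 _ h2.
have : S - c < e by nra.
lra.
Qed.

Lemma coef_bounds (I : choiceType) (J : nat -> {fset I}) (f ft : I -> H) (i : I) :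
  (forall n k, (n <= k)%N -> i \in J n -> i \in J k) -> (exists n, i \in J n) ->
  (fun n => hnorm ip (\sum_(j <- J n) ip (ft i) (f j) *: f j - f i)) @ \oo --> (0 : R) ->
  0 <= complex.Re (ip (f i) (ft i)) <= 1.
Proof.
move=> Jmono [n0 Hn0] hcv.
set g := ft i; set c := complex.Re (ip (f i) g).
set u := fun n => \sum_(j <- J n) ip g (f j) *: f j - f i.
set S := fun n => \sum_(j <- J n) cabs2 (ip g (f j)).
have ReU n : complex.Re (ip (u n) g) = S n - c.
  rewrite /u ipB ip_sum.
  have -> : complex.Re (\sum_(j <- J n) ip g (f j) * ip (f j) g - ip (f i) g)
    = complex.Re (\sum_(j <- J n) ip g (f j) * ip (f j) g) - c.
    by rewrite /c; case: (\sum_(j <- J n) _); case: (ip (f i) g).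
  rewrite Re_sum /S; congr (_ - _); apply: eq_bigr => j _.
  by rewrite (csym g (f j)) Re_mulJ.
set K := sqnorm ip g + 1.
have K1 : 1 <= K by rewrite /K lerDr pos.
have bnd n : (S n - c)^+2 <= K * hnorm ip (u n) ^+ 2.
  rewrite -ReU /hnorm sqr_sqrtr ?pos //.
  apply: le_trans (cs _ _).
  by case: (ip (u n) g) => z1 z2; rewrite /cabs2 /=; nra.
have Sge n : (n0 <= n)%N -> 0 <= S n /\ c^+2 <= S n.
  move=> hn; have iJ := Jmono _ _ hn Hn0.
  rewrite /S (big_rem _ iJ) /=.
  have s0 : 0 <= \sum_(y <- rem i (J n)) cabs2 (ip g (f y)).
    by apply: sumr_ge0 => j _; exact: cabs2_ge0.
  have c0 := cabs2_ge0 (ip g (f i)).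
  split; first lra.
  have := cabs2_conj_ge (ip (f i) g); rewrite -(csym (f i) g) -/c; lra.
have key e : 0 < e -> -e <= c /\ c^+2 - e <= c.
  move=> e0.
  have eK : 0 < e / K by apply: divr_gt0 => //; lra.
  have [N _ hN] := cvgr0_norm_lt _ hcv _ eK.
  have hn : (maxn N n0 >= N)%N by rewrite leq_maxl.
  have := hN _ hn; rewrite /= ger0_norm; last by rewrite /hnorm sqrtr_ge0.
  move=> hlt.
  have [S0 cS] := Sge (maxn N n0) (leq_maxr _ _).
  move: hlt (bnd (maxn N n0)). rewrite /u. move=> hlt hb. apply: (final_arith _ _ _ _ _ e0 K1 _ hlt hb S0 cS).
  by rewrite /hnorm; exact: sqrtr_ge0.
have c0 : 0 <= c.
  rewrite leNgt; apply/negP => cn.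
  have := key (- c / 2); lra.
have c1 : c^+2 <= c.
  rewrite leNgt; apply/negP => cn.
  have := key ((c^+2 - c) / 2); lra.
apply/andP; split => //; nra.
Qed.

End Hil.
Section LimInf.
Variable R : realType.
Implicit Types u : R^o^nat.

Lemma bnd_fun u (M : R) : (forall n, `|u n| <= M) -> bounded_fun u.
Proof.
move=> hM; rewrite /bounded_near; near=> M' => n _ /=.
apply: le_trans (hM n) _; near: M'; apply: nbhs_pinfty_ge; exact: num_real.
Unshelve. all: end_near. Qed.

Lemma liminf_ge u r : bounded_fun u ->
  (forall e, 0 < e -> exists N, forall n, (N <= n)%N -> r - e <= u n) ->
  r <= limn_inf u.
Proof.
move=> bu h; rewrite limn_infE //; apply/ler_addgt0Pr => e e0.
have [N hN] := h e e0; rewrite -lerBlDr.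
apply: le_trans (_ : infs u N <= _).
  apply: lb_le_inf; first by exists (u N); exists N => /=.
  by move=> _ [k /= kN <-]; exact: hN.
apply: ub_le_sup; first exact: bounded_fun_has_ubound_infs.
by exists N.
Qed.

Lemma liminf_ge_inv u r : bounded_fun u -> r <= limn_inf u ->
  forall e, 0 < e -> exists N, forall n, (N <= n)%N -> r - e <= u n.
Proof.
move=> bu; rewrite limn_infE // => hr e e0.
have : r - e < sup (range (infs u)) by lra.
case/sup_gt; first by exists (infs u 0%N); exists 0%N.
move=> _ [N _ <-] hlt; exists N => n hn.
apply: (le_trans (ltW hlt)); apply: ge_inf.
  by apply: has_lbound_sdrop; exact: bounded_fun_has_lbound.
by exists n.
Qed.

Lemma limsup_le u r : bounded_fun u ->
  (forall e, 0 < e -> exists N, forall n, (N <= n)%N -> u n <= r + e) ->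
  limn_sup u <= r.
Proof.
move=> bu h; rewrite limn_supE //; apply/ler_addgt0Pr => e e0.
have [N hN] := h e e0.
apply: le_trans (_ : sups u N <= _).
  apply: ge_inf; first exact: bounded_fun_has_lbound_sups.
  by exists N.
apply: ge_sup; first by exists (u N); exists N => /=.
by move=> _ [k /= kN <-]; exact: hN.
Qed.

Lemma limsup_le_inv u r : bounded_fun u -> limn_sup u <= r ->
  forall e, 0 < e -> exists N, forall n, (N <= n)%N -> u n <= r + e.
Proof.
move=> bu; rewrite limn_supE // => hr e e0.
have : inf (range (sups u)) < r + e by lra.
case/inf_lt; first by exists (sups u 0%N); exists 0%N.
move=> _ [N _ <-] hlt; exists N => n hn.
apply: (le_trans _ (ltW hlt)); apply: ub_le_sup.
  by apply: has_ubound_sdrop; exact: bounded_fun_has_ubound.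
by exists n.
Qed.

End LimInf.
Section Seq.
Variables (R : realType) (I : choiceType) (J : nat -> {fset I}).
Hypothesis Jmon : forall n, (J n `<=` J n.+1)%fset.

Lemma Jsub n k : (n <= k)%N -> (J n `<=` J k)%fset.
Proof.
elim: k => [|k IH]; first by rewrite leqn0 => /eqP ->; exact: fsubset_refl.
rewrite leq_eqVlt => /orP[/eqP -> | hk]; first exact: fsubset_refl.
exact: fsubset_trans (IH hk) (Jmon k).
Qed.

Lemma sum1E (s : seq I) : \sum_(i <- s) (1 : R) = (size s)%:R.
Proof. by rewrite -sum1_size natr_sum. Qed.

Lemma sum_bnd (c : I -> R) (s : seq I) : (forall i, 0 <= c i <= 1) ->
  0 <= \sum_(i <- s) c i <= (size s)%:R.
Proof.
move=> hc; apply/andP; split.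
  by apply: sumr_ge0 => i _; case/andP: (hc i).
by rewrite -sum1E; apply: ler_sum => i _; case/andP: (hc i).
Qed.

Lemma sumJ_fc (c : I -> R) : (forall i, 0 <= c i <= 1) ->
  frame_compatible J (fun n => \sum_(i <- J n) c i).
Proof.
move=> hc; split; first exact: sum_bnd.
move=> n.
rewrite (big_fsetID _ (mem (J n)) (J n.+1)) /=.
have -> : \sum_(i <- [fset x in J n.+1 | x \in J n]%fset) c i = \sum_(i <- J n) c i.
  apply: eq_fbigl => x; rewrite !inE /=.
  case xn: (x \in J n); rewrite ?andbF ?andbT //.
  by rewrite (fsubsetP (Jmon n)).
have -> : \sum_(i <- [fset x in J n.+1 | x \notin J n]%fset) c i
     = \sum_(i <- (J n.+1 `\` J n)%fset) c i.
  by apply: eq_fbigl => x; rewrite !inE /= andbC.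
rewrite addrC addrK; exact: sum_bnd.
Qed.

Lemma cardJE : cardJ J = fun n => \sum_(i <- J n) (1 : R).
Proof. by apply: funext => n; rewrite sum1E. Qed.

Lemma fc_XP (x : nat -> R) : frame_compatible J x -> @XP R I J x.
Proof. by move=> h; exists x, 1; split => //; apply: funext => n; rewrite mul1r. Qed.

Lemma XP_XR (x : nat -> R) : @XP R I J x -> @XR R I J x.
Proof.
move=> h; exists x, (fun _ => 0); split => //.
  case: h => y [c [fy _ _]]; exists y, 0; split => //.
  by apply: funext => n; rewrite mul0r.
by apply: funext => n; rewrite subr0.
Qed.

Lemma XP_card (r : R) : 0 <= r -> XP J (fun n => r * cardJ J n).
Proof.
move=> r0; exists (cardJ J), r; split => //.
rewrite cardJE; apply: sumJ_fc => i; by rewrite ler01 lexx.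
Qed.

End Seq.

Lemma div01 (R : realType) (x y : R) : 0 <= x <= y -> 0 <= x / y <= 1.
Proof.
case: (eqVneq y 0) => [->|cn]; first by rewrite invr0 mulr0 lexx ler01.
move=> /andP[b0 bc]; have cp : 0 < y by lra.
by rewrite divr_ge0 ?ler_pdivrMr ?mul1r //; lra.
Qed.

Theorem proposition5p13 (R : realType) (H : lmodType R[i]) (ip : H -> H -> R[i])
    (I : choiceType) (J : nat -> {fset I}) (W : topologicalType)
    (m : (nat -> R) -> W -> R) (f ft : I -> H) :
  is_separable_hilbert ip ->
  (exists i0 : I, True) ->
  (forall n, (J n `<=` J n.+1)%fset) ->
  (forall i : I, exists n, i \in J n) ->
  compact [set: W] -> hausdorff_space W ->
  is_seq_measure J m ->
  is_frame_for_span ip f ->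
  is_canonical_dual ip J f ft ->
  let b := frame_b ip J f ft in
  let a := fun n => b n / cardJ J n in
  [/\ (forall c : R, a @ \oo --> c -> m b = (fun _ => c)),
      (forall w : W, limn_inf a <= m b w <= limn_sup a),
      (exists v : W, m b v = limn_inf a)
    & (exists w : W, m b w = limn_sup a)].
Proof.
move=> [[lin csym] pos _ _ _] [i0 _] Jmon Jcov cW _ [Hcont Hlin Happ Hle Hone] _ Hdual b a.
set card := @cardJ R I J.
have cb i : 0 <= complex.Re (ip (f i) (ft i)) <= 1.
  apply: (@coef_bounds R H ip lin csym pos I J f ft i) => //; last by case: (Hdual i).
  by move=> n k nk; apply/fsubsetP; exact: (@Jsub I J Jmon).
have fcb : frame_compatible J b by exact: (@sumJ_fc R I J Jmon).
have XPb : XP J b by exact: fc_XP.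
have XRb : XR J b by exact: XP_XR.
have XRc : XR J card.
  by apply: XP_XR; rewrite /card cardJE; apply: fc_XP; apply: (@sumJ_fc R I J Jmon) => i; rewrite ler01 lexx.
have [N0 HN0] : exists N0, forall n, (N0 <= n)%N -> card n != 0.
  have [n0 h0] := Jcov i0; exists n0 => n hn.
  rewrite /card /cardJ pnatr_eq0 -lt0n.
  apply: (@leq_trans #|` [fset i0]%fset|); first by rewrite cardfs1.
  apply: fsubset_leq_card; apply: fsubset_trans (@Jsub I J Jmon _ _ hn).
  by apply/fsubsetP => x; rewrite inE => /eqP ->.
have bcard n : 0 <= b n <= card n.
  by have := @sum_bnd R I _ (J n) cb; rewrite /card /cardJ.
have a01 n : 0 <= a n <= 1.
  exact: (@div01 _ _ _ (bcard n)).
have ba : bounded_fun a by apply: (@bnd_fun _ _ 1) => n; have := a01 n; rewrite ler_norml; lra.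
set L := limn_inf a; set U := limn_sup a.
have L0 : 0 <= L.
  apply: liminf_ge => // e e0; exists 0%N => n _; have := a01 n; lra.
have U0 : 0 <= U.
  rewrite leNgt; apply/negP => Un.
  have U2 : 0 < - U / 2 by lra.
  have [N hN] := @limsup_le_inv _ _ _ ba (lexx U) _ U2.
  have := hN N (leqnn N); have := a01 N; lra.
have mconst r : m (fun n => r * card n) = fun _ => r.
  have := Hlin card card r 0 XRc XRc; rewrite Hone.
  have -> : (fun n => r * card n + 0 * card n) = (fun n => r * card n).
    by apply: funext => n; rewrite mul0r addr0.
  by move=> ->; apply: funext => w; rewrite mul0r addr0 mulr1.
have vE r n : (N0 <= n)%N -> (b n - r * card n) / card n = a n - r.
  move=> hn; have := HN0 _ hn => cn; rewrite /a; field; try exact: cn.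
have vF r n : (N0 <= n)%N -> (r * card n - b n) / card n = r - a n.
  move=> hn; have := HN0 _ hn => cn; rewrite /a; field; try exact: cn.
have vbnd r (s : bool) : 0 <= r -> bounded_fun
    (fun n => (if s then b n - r * card n else r * card n - b n) / card n).
  move=> r0; apply: (@bnd_fun _ _ (1 + r)) => n.
  case: (eqVneq (card n) 0) => [->|cn]; first by rewrite invr0 mulr0 normr0; lra.
  have : (if s then b n - r * card n else r * card n - b n) / card n
     = if s then a n - r else r - a n by case: s; rewrite /a; field; try exact: cn.
  by move=> ->; have := a01 n; rewrite ler_norml; case: s; lra.
have lower r : 0 <= r -> (forall w, r <= m b w) <-> r <= L.
  move=> r0; have := Hle _ _ (@XP_card R I J Jmon r r0) XPb; rewrite mconst => ->.
  rewrite /seq_leqq; split.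
  - move=> hl; apply: liminf_ge => // e e0.
    have [N hN] := @liminf_ge_inv _ _ _ (vbnd r true r0) hl _ e0.
    exists (maxn N N0) => n hn.
    have := hN n (leq_trans (leq_maxl _ _) hn).
    by rewrite vE ?(leq_trans (leq_maxr _ _) hn) //=; lra.
  - move=> hl; apply: liminf_ge; first exact: (vbnd r true r0).
    move=> e e0; have [N hN] := @liminf_ge_inv _ _ _ ba hl _ e0.
    exists (maxn N N0) => n hn.
    have := hN n (leq_trans (leq_maxl _ _) hn).
    by rewrite /= vE ?(leq_trans (leq_maxr _ _) hn) //=; lra.
have upper r : 0 <= r -> (forall w, m b w <= r) <-> U <= r.
  move=> r0; have := Hle _ _ XPb (@XP_card R I J Jmon r r0); rewrite mconst => ->.
  rewrite /seq_leqq; split.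
  - move=> hl; apply: limsup_le => // e e0.
    have [N hN] := @liminf_ge_inv _ _ _ (vbnd r false r0) hl _ e0.
    exists (maxn N N0) => n hn.
    have := hN n (leq_trans (leq_maxl _ _) hn).
    by rewrite vF ?(leq_trans (leq_maxr _ _) hn) //=; lra.
  - move=> hl; apply: liminf_ge; first exact: (vbnd r false r0).
    move=> e e0; have [N hN] := @limsup_le_inv _ _ _ ba hl _ e0.
    exists (maxn N N0) => n hn.
    have := hN n (leq_trans (leq_maxl _ _) hn).
    by rewrite /= vF ?(leq_trans (leq_maxr _ _) hn) //=; lra.
have two w : L <= m b w <= U.
  apply/andP; split; [exact: ((lower L L0).2 (lexx L)) | exact: ((upper U U0).2 (lexx U))].
have [w0 _] : exists w : W, True.
  apply: contrapT => hW.
  have e0 : m (fun _ => 0) = m card.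
    by apply: funext => w; exfalso; apply: hW; exists w.
  have XR0 : XR J (fun _ => 0 : R).
    by apply: XP_XR; exists card, 0; split => //; [rewrite /card cardJE; apply: (@sumJ_fc R I J Jmon) => i; rewrite ler01 lexx | apply: funext => n; rewrite mul0r].
  have := (Happ _ _ XR0 XRc).1 e0.
  rewrite /seq_approx => /cvgr_dist_lt/(_ (1/2)) [].
    by rewrite divr_gt0 // ltr01.
  move=> N _ hN.
  have := hN (maxn N N0) (leq_maxl _ _) => /=.
  have := HN0 _ (leq_maxr N N0) => cn.
  rewrite !sub0r mulNr opprK divff // normr1.
  lra.
have cont : {within [set: W], continuous (m b)}.
  by apply: continuous_subspaceT; exact: Hcont.
split.
- move=> c ac; have [hL hU] := cvg_limn_inf_sup ac.
  apply: funext => w; have := two w; rewrite /L /U hL hU => h.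
  by case/andP: h => h1 h2; apply/eqP; rewrite eq_le h1 h2.
- exact: two.
- have [v _ hv] := compact_EVT_min (@ex_intro _ _ w0 Logic.I) cW cont.
  exists v; have := two v => /andP[h1 _].
  apply/eqP; rewrite eq_le h1 andbT.
  apply/(lower _ (le_trans L0 h1)) => w; apply: hv; exact: in_setT.
- have [v _ hv] := compact_EVT_max (@ex_intro _ _ w0 Logic.I) cW cont.
  exists v; have := two v => /andP[h1 h2].
  apply/eqP; rewrite eq_le h2 /=.
  apply/(upper _ (le_trans L0 h1)) => w; apply: hv; exact: in_setT.
Qed.
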